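(* Let $f:\mathbb{R}^n\to\mathbb{R}$ be $L$-smooth (differentiable with $L$-Lipschitz gradient) and $\mu$-strongly convex with $0<\mu\le L$, let $\mathcal{X}\subset\mathbb{R}^n$ be a nonempty closed convex set, and let $x^\star$ be the unique minimizer of $f$ over $\mathcal{X}$. Let $x^t\in\mathbb{R}^n$ be a (possibly random) point and $g^t$ a random vector in $\mathbb{R}^n$ such that, with $\mathbb{E}_t[\cdot]=\mathbb{E}[\cdot\mid x^t]$, $$\|\mathbb{E}_t[g^t]-\nabla f(x^t)\|\le C_t,\qquad \mathbb{E}_t\|g^t-\mathbb{E}_t[g^t]\|^2\le D_t$$ for some $C_t,D_t\ge0$. Let $x^{t+1}=P_{\mathcal{X}}(x^t-\eta g^t)$ with $\eta=\frac{1}{2(\mu+L)}$, where $P_{\mathcal{X}}$ is the Euclidean projection onto $\mathcal{X}$. Then $$\mathbb{E}_t\|x^{t+1}-x^\star\|^2\le\Big(1-\frac{\mu}{2(\mu+L)}\Big)\|x^t-x^\star\|^2+\Big(\frac{1}{2(\mu+L)^2}+\frac{1}{2\mu L}\Big)C_t^2+\frac{1}{4(\mu+L)^2}D_t.$$ *)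

(* Defs.v *)
From HB Require Import structures.
From mathcomp Require Import all_boot all_order all_algebra.
From mathcomp Require Import all_classical all_reals all_analysis.
Set Implicit Arguments. Unset Strict Implicit. Unset Printing Implicit Defensive.
Import Order.TTheory GRing.Theory Num.Theory.
Import numFieldNormedType.Exports.
Local Open Scope ring_scope.

Definition dotv {R : realType} {n : nat} (u v : 'rV[R]_n) : R :=
  \sum_(i < n) u ord0 i * v ord0 i.
Definition sqnorm {R : realType} {n : nat} (v : 'rV[R]_n) : R := dotv v v.
Definition enorm {R : realType} {n : nat} (v : 'rV[R]_n) : R := Num.sqrt (sqnorm v).

Definition has_gradient {R : realType} {n : nat}
  (f : 'rV[R]_n -> R) (gf : 'rV[R]_n -> 'rV[R]_n) : Prop :=
  forall x, differentiable f x /\ forall v, 'd f x v = dotv (gf x) v.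

Definition L_smooth {R : realType} {n : nat}
  (L : R) (f : 'rV[R]_n -> R) (gf : 'rV[R]_n -> 'rV[R]_n) : Prop :=
  has_gradient f gf /\ forall x y, enorm (gf x - gf y) <= L * enorm (x - y).

Definition strongly_convex {R : realType} {n : nat} (mu : R) (f : 'rV[R]_n -> R) : Prop :=
  forall x y (l : R), 0 <= l <= 1 ->
    f (l *: x + (1 - l) *: y) <=
      l * f x + (1 - l) * f y - mu / 2 * l * (1 - l) * sqnorm (x - y).

Definition is_projection {R : realType} {n : nat}
  (X : set 'rV[R]_n) (p : 'rV[R]_n -> 'rV[R]_n) : Prop :=
  forall y, X (p y) /\ forall z, X z -> enorm (y - p y) <= enorm (y - z).

Definition mean_vec {R : realType} {n : nat} {d} {T : measurableType d}
  (P : probability T R) (g : T -> 'rV[R]_n) : 'rV[R]_n :=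
  \row_(i < n) fine (\int[P]_w ((g w ord0 i)%:E)).

(* Main.v *)
Require Import Defs.
From HB Require Import structures.
From mathcomp Require Import all_boot all_order all_algebra.
From mathcomp Require Import all_classical all_reals all_analysis.
From mathcomp Require Import ring lra.
Import Order.TTheory GRing.Theory Num.Theory.
Import numFieldNormedType.Exports.
Local Open Scope classical_set_scope.
Local Open Scope ring_scope.
Section LA.
Context {R : realType} {n : nat}.
Implicit Types u v w : 'rV[R]_n.

Lemma dotvC u v : dotv u v = dotv v u.
Proof. by apply: eq_bigr => i _; rewrite mulrC. Qed.
Lemma dotvDl u w v : dotv (u + w) v = dotv u v + dotv w v.
Proof. by rewrite /dotv -big_split; apply: eq_bigr => i _; rewrite mxE mulrDl. Qed.
Lemma dotvZl (k : R) u v : dotv (k *: u) v = k * dotv u v.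
Proof. by rewrite /dotv mulr_sumr; apply: eq_bigr => i _; rewrite mxE mulrA. Qed.
Lemma dotvNl u v : dotv (- u) v = - dotv u v.
Proof. by rewrite -scaleN1r dotvZl mulN1r. Qed.
Lemma dotvDr u v w : dotv u (v + w) = dotv u v + dotv u w.
Proof. by rewrite dotvC dotvDl !(dotvC u). Qed.
Lemma dotvZr (k : R) u v : dotv u (k *: v) = k * dotv u v.
Proof. by rewrite dotvC dotvZl dotvC. Qed.
Lemma dotvNr u v : dotv u (- v) = - dotv u v.
Proof. by rewrite dotvC dotvNl dotvC. Qed.
Lemma sqnorm_ge0 u : 0 <= sqnorm u.
Proof. by apply: sumr_ge0 => i _; rewrite -expr2 sqr_ge0. Qed.
Lemma dotv0l v : dotv 0 v = 0.
Proof. by rewrite -(scale0r (0 : 'rV[R]_n)) dotvZl mul0r. Qed.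

Lemma sqnormZ (k : R) u : sqnorm (k *: u) = k ^+ 2 * sqnorm u.
Proof. by rewrite /sqnorm dotvZl dotvZr mulrA expr2. Qed.

Lemma sqnormDZ u v (k : R) :
  sqnorm (u + k *: v) = sqnorm u + 2 * k * dotv u v + k ^+ 2 * sqnorm v.
Proof. rewrite /sqnorm dotvDl !dotvDr !dotvZl !dotvZr (dotvC v u); ring. Qed.

Lemma sqnormD u v : sqnorm (u + v) = sqnorm u + 2 * dotv u v + sqnorm v.
Proof. rewrite /sqnorm dotvDl !dotvDr (dotvC v u); ring. Qed.
Lemma sqnormN u : sqnorm (- u) = sqnorm u.
Proof. by rewrite /sqnorm dotvNl dotvNr opprK. Qed.

Definition dotE := (dotvDl, dotvDr, dotvZl, dotvZr, dotvNl, dotvNr).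

Lemma enorm_sq u v (k : R) : 0 <= k -> enorm u <= k * enorm v -> sqnorm u <= k ^+ 2 * sqnorm v.
Proof.
move=> k0; rewrite /enorm => h.
have h1 : Num.sqrt (sqnorm u) ^+ 2 <= (k * Num.sqrt (sqnorm v)) ^+ 2.
  by rewrite ler_pXn2r ?nnegrE ?sqrtr_ge0 ?mulr_ge0 ?sqrtr_ge0.
by rewrite exprMn !sqr_sqrtr ?sqnorm_ge0 in h1.
Qed.

Lemma sqnorm_le u v : sqnorm u <= sqnorm v -> enorm u <= enorm v -> True.
Proof. by []. Qed.

Lemma enorm_le_sq u v : enorm u <= enorm v -> sqnorm u <= sqnorm v.
Proof. by move=> h; have := @enorm_sq u v 1 ler01; rewrite mul1r expr1n mul1r; apply. Qed.

End LA.
Lemma eps_le {R : realType} (a b c : R) : 0 <= c ->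
  (forall t, 0 < t -> t <= 1 -> a <= b + t * c) -> a <= b.
Proof.
move=> c0 h.
have [c00|cpos] := eqVneq c 0.
  by have := h 1 ltr01 (lexx _); rewrite c00 mulr0 addr0.
have cp : 0 < c by rewrite lt_neqAle eq_sym cpos.
rewrite leNgt; apply/negP => ab.
pose t := Order.min 1 ((a - b) / (2 * c)).
have tp : 0 < t by rewrite lt_min ltr01 divr_gt0 ?subr_gt0 ?mulr_gt0.
have t1 : t <= 1 by rewrite ge_min lexx.
have t2 : t <= (a - b) / (2 * c) by rewrite ge_min lexx orbT.
have := h t tp t1.
have : t * c <= (a - b) / 2.
  rewrite -(ler_pM2r cp) in t2; apply: (le_trans t2).
  have e : (a - b) / (2 * c) * c = (a - b) / 2.
    by field; rewrite gt_eqF.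
  by rewrite e.
lra.
Qed.
Lemma line_deriv {R : realType} {n : nat} (f : 'rV[R]_n -> R) gf :
  has_gradient f gf -> forall x v (t : R),
  is_derive t 1 (fun s : R => f (x + s *: v)) (dotv (gf (x + t *: v)) v).
Proof.
move=> hg x v t.
set y := x + t *: v.
have E : (fun h : R => h^-1 *: (((fun s : R => f (x + s *: v)) \o shift t) (h *: 1)
             - (fun s : R => f (x + s *: v)) t))
       = (fun h : R => h^-1 *: ((f \o shift y) (h *: v) - f y)).
  apply: funext => h /=; congr (_ *: (_ - _)); congr f.
  by rewrite /y scalerDl [h *: 1]mulr1 addrC [x + _]addrC addrA.
have [df dfv] := hg y.
have dv : derivable f y v by exact: diff_derivable.
have d1 : derivable (fun s : R => f (x + s *: v)) t 1.
  by rewrite /derivable E.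
apply: DeriveDef => //.
rewrite /derive E -/(derive f y v) deriveE //.
Qed.

Lemma line_mvt {R : realType} {n : nat} (f : 'rV[R]_n -> R) gf :
  has_gradient f gf -> forall x v (l : R), 0 < l ->
  exists c, (0 < c < l) /\ f (x + l *: v) - f x = l * dotv (gf (x + c *: v)) v.
Proof.
move=> hg x v l l0.
have hd := @line_deriv R n f gf hg x v.
have cont : {within `[0, l], continuous (fun s : R => f (x + s *: v))}.
  apply: derivable_within_continuous => s _.
  exact: (@ex_derive _ _ _ _ _ _ _ (hd s)).
have [c cI E] := MVT l0 (fun s _ => hd s) cont.
exists c; split; first by move: cI; rewrite in_itv.
by rewrite scale0r addr0 in E; rewrite E subr0 mulrC.
Qed.

Lemma sqnormE {R : realType} {n : nat} (u : 'rV[R]_n) : sqnorm u = dotv u u.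
Proof. by []. Qed.

Section Calc.
Context {R : realType} {n : nat} (f : 'rV[R]_n -> R) (gf : 'rV[R]_n -> 'rV[R]_n) (L mu : R).
Hypothesis mu0 : 0 < mu.
Hypothesis muL : mu <= L.
Hypothesis Ls : L_smooth L f gf.
Hypothesis sc : strongly_convex mu f.

Let L0 : 0 < L. Proof. exact: lt_le_trans muL. Qed.

Lemma lip_dot y v (t : R) : 0 < t ->
  `|dotv (gf (y + t *: v) - gf y) v| <= L * t * sqnorm v.
Proof.
move=> t0; set u := gf (y + t *: v) - gf y.
have h1 : sqnorm u <= L ^+ 2 * (t ^+ 2 * sqnorm v).
  have := @enorm_sq R n u (y + t *: v - y) L (ltW L0) (Ls.2 _ _).
  by rewrite addrAC subrr add0r sqnormZ.
have h2 := sqnorm_ge0 (u + (- (L * t)) *: v).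
have h3 := sqnorm_ge0 (u + (L * t) *: v).
rewrite !sqnormDZ in h2 h3.
have Lt : 0 < L * t by rewrite mulr_gt0.
move: h1 h2 h3; rewrite mulrA -exprMn; move: (L * t) Lt => p p0 h1 h2 h3.
rewrite ler_norml; apply/andP; split.
  have : p * (- (p * sqnorm v) - dotv u v) <= 0 by nra.
  by rewrite pmulr_rle0 // subr_le0.
have : p * (dotv u v - p * sqnorm v) <= 0 by nra.
by rewrite pmulr_rle0 // subr_le0.
Qed.

Lemma descent y v : f (y + v) <= f y + dotv (gf y) v + L * sqnorm v.
Proof.
have [c [/andP[c0 c1] E]] := @line_mvt R n f gf Ls.1 y v 1 ltr01.
rewrite scale1r mul1r in E. have Lp := L0.
have := lip_dot y v c c0; rewrite dotvDl dotvNl ler_norml => /andP[_ h].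
have sv := sqnorm_ge0 v.
have : L * c * sqnorm v <= L * sqnorm v.
  by rewrite -mulrA ler_pM2l // ler_piMl // ltW.
lra.
Qed.

Lemma sc_lower y v : f y + dotv (gf y) v + mu / 2 * sqnorm v <= f (y + v).
Proof.
have sv := sqnorm_ge0 v. have Lp := L0.
apply: (@eps_le R _ _ ((L + mu / 2) * sqnorm v)) => [|l l0 l1].
  have m0 := mu0.
  have h : (0:R) <= L + mu / 2 by lra.
  exact: mulr_ge0.
have lI : 0 <= l <= 1 by rewrite ltW //= l1.
have SC := sc (y + v) y l lI.
have e1 : l *: (y + v) + (1 - l) *: y = y + l *: v.
  by apply/rowP => i; rewrite !mxE; ring.
have e2 : y + v - y = v by apply/rowP => i; rewrite !mxE; ring.
rewrite e1 e2 in SC.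
have [c [/andP[c0 cl] E]] := @line_mvt R n f gf Ls.1 y v l l0.
have := lip_dot y v c c0; rewrite dotvDl dotvNl ler_norml => /andP[h _].
set G := dotv (gf y) v in h *; set D := dotv (gf (y + c *: v)) v in h E.
set F1 := f (y + v) in SC *; set F0 := f y in SC E *.
have H : l * (G - L * c * sqnorm v - (F1 - F0 - mu / 2 * (1 - l) * sqnorm v)) <= 0.
  have : l * (G - L * c * sqnorm v) <= l * D by rewrite ler_pM2l //; lra.
  nra.
rewrite pmulr_rle0 // in H.
have : L * c * sqnorm v <= L * l * sqnorm v.
  by rewrite -!mulrA ler_pM2l //; apply: ler_wpM2r => //; exact: ltW.
have m0 := mu0.
nra.
Qed.

Lemma strong_mono x y : mu * sqnorm (x - y) <= dotv (gf x - gf y) (x - y).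
Proof.
have h1 := sc_lower y (x - y).
have h2 := sc_lower x (y - x).
have e1 : y + (x - y) = x by rewrite addrC subrK.
have e2 : x + (y - x) = y by rewrite addrC subrK.
have e3 : y - x = - (x - y) by rewrite opprB.
rewrite e1 in h1; rewrite e2 e3 sqnormN dotvNr in h2.
rewrite dotvDl dotvNl. lra.
Qed.

Definition hf z := f z - mu / 2 * sqnorm z.
Definition gh z := gf z - mu *: z.

Lemma hS x z : hf x + dotv (gh x) (z - x) <= hf z.
Proof.
have h1 := sc_lower x (z - x).
have e1 : x + (z - x) = z by rewrite addrC subrK.
rewrite e1 in h1.
have e2 : sqnorm z = sqnorm x + 2 * dotv x (z - x) + sqnorm (z - x).
  by rewrite -sqnormD e1.
rewrite /hf /gh e2 dotvDl dotvNl dotvZl. 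
have m0 := mu0. have sv := sqnorm_ge0 (z - x). nra.
Qed.

Lemma hD x z : hf z <= hf x + dotv (gh x) (z - x) + L * sqnorm (z - x).
Proof.
have h1 := descent x (z - x).
have e1 : x + (z - x) = z by rewrite addrC subrK.
rewrite e1 in h1.
have e2 : sqnorm z = sqnorm x + 2 * dotv x (z - x) + sqnorm (z - x).
  by rewrite -sqnormD e1.
rewrite /hf /gh e2 dotvDl dotvNl dotvZl. 
have m0 := mu0. have sv := sqnorm_ge0 (z - x). nra.
Qed.

Lemma coco1 x y :
  hf x + dotv (gh x) (y - x) + (2 * L)^-1 / 2 * sqnorm (gh y - gh x) <= hf y.
Proof.
set k := (2 * L)^-1.
set w := gh y - gh x.
set z := y - k *: w.
have h1 := hS x z.
have h2 := hD y z.
have e1 : z - x = (y - x) - k *: w by apply/rowP => i; rewrite !mxE; ring.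
have e2 : z - y = - (k *: w) by apply/rowP => i; rewrite !mxE; ring.
rewrite e1 dotvDr dotvNr dotvZr in h1.
rewrite e2 dotvNr dotvZr sqnormN sqnormZ in h2.
have eW : sqnorm w = dotv (gh y) w - dotv (gh x) w by rewrite /sqnorm {1}/w dotvDl dotvNl.
have kL : L * k ^+ 2 = k / 2.
  have Lp := L0. by rewrite /k; field; rewrite gt_eqF.
rewrite mulrA kL in h2.
have ekW : k * sqnorm w = k * dotv (gh y) w - k * dotv (gh x) w by rewrite eW mulrBr.
lra.
Qed.

Lemma coco x y :
  sqnorm (gf x - gf y) + mu * (2 * L + mu) * sqnorm (x - y)
    <= 2 * (L + mu) * dotv (gf x - gf y) (x - y).
Proof.
have h1 := coco1 x y.
have h2 := coco1 y x.
have e1 : gh x - gh y = - (gh y - gh x) by apply/rowP => i; rewrite !mxE; ring.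
have e2 : x - y = - (y - x) by apply/rowP => i; rewrite !mxE; ring.
rewrite e1 sqnormN e2 dotvNr in h2.
set W := sqnorm (gh y - gh x) in h1 h2.
have HW : (2 * L)^-1 * W <= dotv (gh y - gh x) (y - x).
  rewrite dotvDl dotvNl; lra.
have HW2 : W <= 2 * L * dotv (gh y - gh x) (y - x).
  have Lp := L0.
  have e : W = 2 * L * ((2 * L)^-1 * W) by field; rewrite gt_eqF.
  by rewrite {1}e ler_pM2l // mulr_gt0.
have ew : gh y - gh x = (gf y - gf x) + (- mu) *: (y - x).
  by apply/rowP => i; rewrite !mxE; ring.
rewrite /W ew sqnormDZ (dotvDl (gf y - gf x)) dotvZl in HW2.
have e3 : gf x - gf y = - (gf y - gf x) by apply/rowP => i; rewrite !mxE; ring.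
rewrite e2 e3 sqnormN sqnormN dotvNl dotvNr opprK.
have m0 := mu0. have Lp := L0. rewrite -/(sqnorm (y - x)) in HW2. nra.
Qed.

End Calc.
Lemma conv_mem {R : realType} {n : nat} (X : set 'rV[R]_n) : convex_set X ->
  forall x y (t : R), X x -> X y -> 0 <= t -> t <= 1 -> X (t *: x + (1 - t) *: y).
Proof.
move=> cX x y t Xx Xy t0 t1.
have := cX x y (Itv01 t0 t1) (mem_set Xx) (mem_set Xy).
by move/set_mem.
Qed.

Lemma proj_vi {R : realType} {n : nat} (X : set 'rV[R]_n) projX :
  convex_set X -> is_projection X projX ->
  forall y z, X z -> dotv (y - projX y) (z - projX y) <= 0.
Proof.
move=> cX hp y z Xz.
set p := projX y.
have Xp : X p by exact: (hp y).1.
have S0 := sqnorm_ge0 (z - p).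
apply: (@eps_le R _ 0 (sqnorm (z - p) / 2)) => [|t t0 t1].
  by apply: divr_ge0.
have Xq := @conv_mem R n X cX _ _ _ Xz Xp (ltW t0) t1.
have h := enorm_le_sq _ _ ((hp y).2 _ Xq).
have e : y - (t *: z + (1 - t) *: p) = (y - p) + (- t) *: (z - p).
  by apply/rowP => i; rewrite !mxE; ring.
rewrite -/p e sqnormDZ in h.
have H : t * (dotv (y - p) (z - p) - t * (sqnorm (z - p) / 2)) <= 0 by nra.
by rewrite add0r; rewrite pmulr_rle0 // subr_le0 in H.
Qed.

Lemma opt_cond {R : realType} {n : nat} (f : 'rV[R]_n -> R) gf (L mu : R)
  (X : set 'rV[R]_n) xs :
  0 < mu -> mu <= L -> L_smooth L f gf -> convex_set X -> X xs ->
  (forall z, X z -> f xs <= f z) -> forall z, X z -> 0 <= dotv (gf xs) (z - xs).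
Proof.
move=> mu0 muL Ls cX Xxs opt z Xz.
have L0 : 0 < L by exact: lt_le_trans muL.
have S0 := sqnorm_ge0 (z - xs).
suff : - dotv (gf xs) (z - xs) <= 0 by lra.
apply: (@eps_le R _ 0 (L * sqnorm (z - xs))) => [|t t0 t1].
  by rewrite mulr_ge0 // ltW.
have Xq := @conv_mem R n X cX _ _ _ Xz Xxs (ltW t0) t1.
have e : t *: z + (1 - t) *: xs = xs + t *: (z - xs).
  by apply/rowP => i; rewrite !mxE; ring.
rewrite e in Xq.
have h1 := opt _ Xq.
have h2 := descent f gf L mu mu0 muL Ls xs (t *: (z - xs)).
rewrite dotvZr sqnormZ in h2.
have H : t * (- dotv (gf xs) (z - xs) - t * (L * sqnorm (z - xs))) <= 0 by nra.
by rewrite add0r; rewrite pmulr_rle0 // subr_le0 in H.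
Qed.

Lemma proj_point {R : realType} {n : nat} (f : 'rV[R]_n -> R) gf (L mu : R)
  (X : set 'rV[R]_n) projX xs (eta : R) :
  0 < mu -> mu <= L -> L_smooth L f gf -> convex_set X -> is_projection X projX ->
  X xs -> (forall z, X z -> f xs <= f z) -> 0 <= eta ->
  forall y, sqnorm (projX y - xs) <= sqnorm (y - xs + eta *: gf xs).
Proof.
move=> mu0 muL Ls cX hp Xxs opt eta0 y.
have h1 := @proj_vi R n X projX cX hp y xs Xxs.
have Xp : X (projX y) by exact: (hp y).1.
have h2 := @opt_cond R n f gf L mu X xs mu0 muL Ls cX Xxs opt _ Xp.
set p := projX y in h1 h2 Xp *.
have h3 := sqnorm_ge0 ((y - xs + eta *: gf xs) + (-1) *: (p - xs)).
rewrite sqnormDZ in h3.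
have e1 : y - p = (y - xs) + (-1) *: (p - xs) by apply/rowP => i; rewrite !mxE; ring.
have e2 : xs - p = (-1) *: (p - xs) by apply/rowP => i; rewrite !mxE; ring.
rewrite e1 e2 dotvZr dotvDl dotvZl in h1.
rewrite dotvDl dotvZl in h3.
rewrite -/(sqnorm (p - xs)) in h1.
have h4 : 0 <= eta * dotv (gf xs) (p - xs) by rewrite mulr_ge0.
nra.
Qed.

Lemma young {R : realType} {n : nat} (u v : 'rV[R]_n) (k eps : R) : 0 < eps ->
  sqnorm (u + k *: v) <= (1 + eps) * sqnorm u + (1 + eps^-1) * k ^+ 2 * sqnorm v.
Proof.
move=> e0.
have h := sqnorm_ge0 (eps *: u + (- k) *: v).
rewrite sqnormDZ sqnormZ dotvZl in h.
rewrite sqnormDZ.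
have ee : eps * eps^-1 = 1 by rewrite mulfV // gt_eqF.
set U := sqnorm u in h *; set V := sqnorm v in h *; set D := dotv u v in h *.
have : eps * (U + 2 * k * D + k ^+ 2 * V - ((1 + eps) * U + (1 + eps^-1) * k ^+ 2 * V)) <= 0.
  have -> : eps * (U + 2 * k * D + k ^+ 2 * V - ((1 + eps) * U + (1 + eps^-1) * k ^+ 2 * V))
     = - (eps ^+ 2 * U + 2 * - k * (eps * D) + (- k) ^+ 2 * V).
    by field; rewrite gt_eqF.
  by rewrite oppr_le0.
by rewrite pmulr_rle0 // subr_le0.
Qed.

Lemma sq_le_C {R : realType} {n : nat} (u : 'rV[R]_n) (C : R) :
  enorm u <= C -> sqnorm u <= C ^+ 2.
Proof.
move=> h.
have := sqnorm_ge0 u => s0.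
have hC : 0 <= C by apply: le_trans h; exact: sqrtr_ge0.
have : enorm u ^+ 2 <= C ^+ 2 by rewrite ler_pXn2r // ?nnegrE // sqrtr_ge0.
by rewrite /enorm sqr_sqrtr.
Qed.

Lemma core {R : realType} {n : nat} (f : 'rV[R]_n -> R) gf (L mu : R) x xs (m : 'rV[R]_n) (C : R) :
  0 < mu -> mu <= L -> L_smooth L f gf -> strongly_convex mu f ->
  enorm (m - gf x) <= C ->
  sqnorm (x - xs + (- (1 / (2 * (mu + L)))) *: (m - gf xs))
   <= (1 - mu / (2 * (mu + L))) * sqnorm (x - xs)
      + (1 / (2 * (mu + L) ^+ 2) + 1 / (2 * mu * L)) * C ^+ 2.
Proof.
move=> mu0 muL Ls sc hC.
have L0 : 0 < L by exact: lt_le_trans muL.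
set s := mu + L.
have s0 : 0 < s by rewrite /s addr_gt0.
set eta := 1 / (2 * s).
set a := x - xs; set b := gf x - gf xs; set e := m - gf x.
have ec : a + (- eta) *: (m - gf xs) = (a + (- eta) *: b) + (- eta) *: e.
  by apply/rowP => i; rewrite !mxE; ring.
rewrite ec.
set eps := mu * L / (mu * L + 2 * s ^+ 2).
have eps0 : 0 < eps.
  by rewrite /eps divr_gt0 ?mulr_gt0 // addr_gt0 ?mulr_gt0 // exprn_gt0.
have Y := young (a + (- eta) *: b) e (- eta) eps eps0.
apply: (le_trans Y).
have EC := sq_le_C _ _ hC.
have co := coco f gf L mu mu0 muL Ls sc x xs.
have mo := strong_mono f gf L mu mu0 muL Ls sc x xs.
have bb := sqnorm_ge0 (b + (- mu) *: a).
rewrite -/a -/b in co mo.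
rewrite sqnormDZ in bb.
rewrite sqnormDZ (dotvC a b).
have A0 := sqnorm_ge0 a.
have E0 := sqnorm_ge0 e.
set A := sqnorm a in co mo bb A0 *; set B := sqnorm b in co mo bb *.
set E := sqnorm e in EC E0 *; set D := dotv b a in co mo bb *.
have KU : (4 * s ^+ 2) * (A + 2 * - eta * D + (- eta) ^+ 2 * B)
          <= (2 * L + mu) ^+ 2 * A.
  have -> : (4 * s ^+ 2) * (A + 2 * - eta * D + (- eta) ^+ 2 * B)
          = 4 * s ^+ 2 * A - 4 * s * D + B.
    by rewrite /eta; field; rewrite gt_eqF.
  rewrite /s in co *. nra.
have KU' : A + 2 * - eta * D + (- eta) ^+ 2 * B <= (2 * L + mu) ^+ 2 / (4 * s ^+ 2) * A.
  rewrite -(ler_pM2l (_ : (0:R) < 4 * s ^+ 2)); last by rewrite mulr_gt0 // exprn_gt0.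
  have -> : 4 * s ^+ 2 * ((2 * L + mu) ^+ 2 / (4 * s ^+ 2) * A) = (2 * L + mu) ^+ 2 * A.
    by field; rewrite gt_eqF.
  exact: KU.
have T1 : (1 + eps) * ((2 * L + mu) ^+ 2 / (4 * s ^+ 2)) <= 1 - mu / (2 * s).
  have E1 : 1 - mu / (2 * s) - (1 + eps) * ((2 * L + mu) ^+ 2 / (4 * s ^+ 2))
     = 2 * mu ^+ 2 * (s * mu + 4 * s * L - mu * L) / (4 * s ^+ 2 * (mu * L + 2 * s ^+ 2)).
    have q0 : 0 < mu * L + 2 * s ^+ 2 by rewrite addr_gt0 ?mulr_gt0 // exprn_gt0.
    rewrite /eps /s; field.
    by apply/andP; split; apply: lt0r_neq0.
  have P : 0 <= 2 * mu ^+ 2 * (s * mu + 4 * s * L - mu * L) / (4 * s ^+ 2 * (mu * L + 2 * s ^+ 2)).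
    have q0 : 0 < mu * L + 2 * s ^+ 2 by rewrite addr_gt0 ?mulr_gt0 // exprn_gt0.
    apply: divr_ge0; last by rewrite ltW // mulr_gt0 // mulr_gt0 // exprn_gt0.
    apply: mulr_ge0; first by rewrite mulr_ge0 // exprn_ge0 // ltW.
    rewrite /s; nra.
  by rewrite -subr_ge0 E1.
have T2 : (1 + eps^-1) * (- eta) ^+ 2 = 1 / (2 * s ^+ 2) + 1 / (2 * mu * L).
  have q0 : 0 < mu * L + 2 * s ^+ 2 by rewrite addr_gt0 ?mulr_gt0 // exprn_gt0.
  rewrite /eps /eta /s; field.
  by rewrite (lt0r_neq0 L0) (lt0r_neq0 mu0) (lt0r_neq0 s0) (lt0r_neq0 q0).
have e1 : 0 <= 1 + eps by rewrite addr_ge0 // ltW.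
have H1 : (1 + eps) * (A + 2 * - eta * D + (- eta) ^+ 2 * B)
    <= (1 - mu / (2 * s)) * A.
  apply: (le_trans (ler_wpM2l e1 KU')).
  by rewrite mulrA; apply: ler_wpM2r.
have T20 : 0 <= 1 / (2 * s ^+ 2) + 1 / (2 * mu * L).
  by rewrite addr_ge0 // divr_ge0 // ?mulr_ge0 // ?exprn_ge0 // ltW.
have H2 : (1 + eps^-1) * (- eta) ^+ 2 * E
    <= (1 / (2 * s ^+ 2) + 1 / (2 * mu * L)) * C ^+ 2.
  by rewrite T2; apply: ler_wpM2l.
lra.
Qed.
Lemma le_int_ge0 {R : realType} {d} {T : measurableType d}
  (mu : {measure set T -> \bar R}) (f1 f2 : T -> \bar R) :
  (forall w, (0 <= f1 w)%E) -> (forall w, (f1 w <= f2 w)%E) ->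
  (\int[mu]_w f1 w <= \int[mu]_w f2 w)%E.
Proof.
move=> f10 f12.
have f20 w : (0 <= f2 w)%E := le_trans (f10 w) (f12 w).
rewrite !ge0_integralTE //.
apply: ereal_sup_le => _ [h /= hf1 <-]; exists h => //= w.
exact: le_trans (hf1 w) (f12 w).
Qed.

Section Int.
Context {R : realType} {n : nat} {d} {T : measurableType d} (P : probability T R)
  (g : T -> 'rV[R]_n).
Hypothesis hi : forall i : 'I_n, P.-integrable setT (fun w => (g w ord0 i)%:E).
Let m := mean_vec P g.

Lemma mg i : measurable_fun setT (fun w => g w ord0 i).
Proof.
have /integrableP[mf _] := hi i.
exact/measurable_realfun.measurable_EFinP.
Qed.

Lemma intS (D : R) : (\int[P]_w ((sqnorm (g w - m))%:E) <= D%:E)%E ->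
  P.-integrable setT (fun w => (sqnorm (g w - m))%:E).
Proof.
move=> hD; apply/integrableP; split.
  apply/measurable_realfun.measurable_EFinP; rewrite /sqnorm /dotv.
  apply: measurable_sum => i.
  have -> : (fun w => (g w - m) ord0 i * (g w - m) ord0 i) =
     (fun w => g w ord0 i - m ord0 i) \* (fun w => g w ord0 i - m ord0 i).
    by apply: funext => w; rewrite /= !mxE.
  have mi : measurable_fun setT (fun w => g w ord0 i - m ord0 i).
    exact: (measurable_realfun.measurable_funB (mg i) (measurable_cst _)).
  exact: measurable_realfun.measurable_funM.
under eq_integral => w _ do rewrite gee0_abs ?lee_fin ?sqnorm_ge0 //.
by apply: le_lt_trans hD _; rewrite ltry.
Qed.

Lemma int_main (D : R) (k : 'rV[R]_n) (c q : R) :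
  (\int[P]_w ((sqnorm (g w - m))%:E) <= D%:E)%E ->
  (\int[P]_w ((c + dotv k (g w) + q * sqnorm (g w - m))%:E)
   = (c + dotv k m)%:E + q%:E * \int[P]_w ((sqnorm (g w - m))%:E))%E.
Proof.
move=> hD.
have iS := intS D hD.
have ig i : P.-integrable setT (fun w => (k ord0 i)%:E * (g w ord0 i)%:E)%E.
  exact: (integrableZl measurableT).
have isum : P.-integrable setT
    (fun w => \sum_(i < n) ((k ord0 i)%:E * (g w ord0 i)%:E))%E.
  by apply: (integrable_sum measurableT) => i _; exact: ig.
have icst : P.-integrable setT (fun w : T => c%:E).
  exact: (@finite_measure_integrable_cst _ _ _ P setT c measurableT).
rewrite (eq_integral (fun w => (c%:E + \sum_(i < n) ((k ord0 i)%:E * (g w ord0 i)%:E))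
     + q%:E * (sqnorm (g w - m))%:E)%E); last first.
  move=> w _; rewrite [dotv k _]/dotv !EFinD EFinM; congr (_ + _ + _).
  by rewrite -sumEFin; apply: eq_bigr => i _; rewrite EFinM.
have i1 : P.-integrable setT
    (fun w => c%:E + \sum_(i < n) ((k ord0 i)%:E * (g w ord0 i)%:E))%E.
  exact: (integrableD measurableT icst isum).
rewrite (integralD measurableT i1 (integrableZl measurableT q iS)).
rewrite (integralD measurableT icst isum) integral_cst //.
rewrite [X in (c%:E * X)%E](_ : _ = 1%E); last exact: probability_setT.
rewrite mule1.
rewrite (integral_sum measurableT ig).
rewrite (integralZl measurableT iS).
have ei i : (\int[P]_w ((k ord0 i)%:E * (g w ord0 i)%:E) = (k ord0 i * m ord0 i)%:E)%E.
  rewrite (integralZl measurableT (hi i)) EFinM /m /mean_vec mxE fineK //.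
  exact: (integrable_fin_num measurableT (hi i)).
under eq_bigr => i _ do rewrite ei.
by rewrite sumEFin -EFinD.
Qed.

End Int.

Theorem lemmaB1 (R : realType) (n : nat) (f : 'rV[R]_n -> R)
  (gf : 'rV[R]_n -> 'rV[R]_n) (L mu : R)
  (X : set 'rV[R]_n) (projX : 'rV[R]_n -> 'rV[R]_n) (xs : 'rV[R]_n)
  (d : measure_display) (T : measurableType d) (P : probability T R)
  (x : 'rV[R]_n) (g : T -> 'rV[R]_n) (C D : R) :
  0 < mu -> mu <= L ->
  L_smooth L f gf -> strongly_convex mu f ->
  X !=set0 -> closed X -> convex_set X ->
  is_projection X projX ->
  X xs -> (forall z, X z -> f xs <= f z) ->
  (forall i : 'I_n, P.-integrable setT (fun w => (g w ord0 i)%:E)) ->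
  0 <= C -> 0 <= D ->
  enorm (mean_vec P g - gf x) <= C ->
  (\int[P]_w ((sqnorm (g w - mean_vec P g))%:E) <= D%:E)%E ->
  (\int[P]_w ((sqnorm (projX (x - (1 / (2 * (mu + L))) *: g w) - xs))%:E)
    <= ((1 - mu / (2 * (mu + L))) * sqnorm (x - xs)
        + (1 / (2 * (mu + L) ^+ 2) + 1 / (2 * mu * L)) * C ^+ 2
        + 1 / (4 * (mu + L) ^+ 2) * D)%:E)%E.
Proof.
move=> mu0 muL Ls sc Xne Xcl cX hp Xxs opt hi C0 D0 hC hD.
have L0 : 0 < L by exact: lt_le_trans muL.
have s0 : 0 < mu + L by rewrite addr_gt0.
set eta := 1 / (2 * (mu + L)).
have eta0 : 0 <= eta by rewrite /eta divr_ge0 // mulr_ge0 // ltW.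
set m := mean_vec P g in hC hD *.
set c0 := x - xs + (- eta) *: (m - gf xs).
set k := (- (2 * eta)) *: c0.
set cc := sqnorm c0 + 2 * eta * dotv c0 m.
have pw w : sqnorm (projX (x - eta *: g w) - xs)
    <= cc + dotv k (g w) + eta ^+ 2 * sqnorm (g w - m).
  have h := @proj_point R n f gf L mu X projX xs eta mu0 muL Ls cX hp Xxs opt eta0
              (x - eta *: g w).
  have e : x - eta *: g w - xs + eta *: gf xs = c0 + (- eta) *: (g w - m).
    by apply/rowP => i; rewrite !mxE; ring.
  rewrite e sqnormDZ in h.
  apply: (le_trans h); rewrite le_eqVlt; apply/orP; left; apply/eqP.
  rewrite /k /cc dotvZl dotvDr dotvNr; ring.
have LHS := @le_int_ge0 R d T P
  (fun w => (sqnorm (projX (x - eta *: g w) - xs))%:E)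
  (fun w => (cc + dotv k (g w) + eta ^+ 2 * sqnorm (g w - m))%:E)
  (fun w => sqnorm_ge0 _) (fun w => pw w).
apply: (le_trans LHS).
rewrite (@int_main R n d T P g hi D k cc (eta ^+ 2) hD).
have ek : cc + dotv k m = sqnorm c0 by rewrite /cc /k dotvZl; ring.
rewrite ek.
have core0 := @core R n f gf L mu x xs m C mu0 muL Ls sc hC.
have H1 : ((eta ^+ 2)%:E * \int[P]_w ((sqnorm (g w - m))%:E) <= (eta ^+ 2)%:E * D%:E)%E.
  by apply: lee_wpmul2l => //; rewrite lee_fin exprn_ge0.
apply: (le_trans (leeD2l _ H1)).
rewrite -EFinM -EFinD lee_fin.
have e2 : eta ^+ 2 = 1 / (4 * (mu + L) ^+ 2).
  by rewrite /eta; field; rewrite gt_eqF.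
rewrite e2.
rewrite -/eta -/c0 in core0.
lra.
Qed.
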